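(* Let $R$ be a commutative ring, $I$ an ideal of $R$, $n\ge 3$, and $a\in R$ non-nilpotent. Let $\alpha(X)\in\mathrm{EO}_{2n}(R_a[X],I_a[X])$ with $\alpha(0)=\mathrm{Id}$. Then there is $d\ge 0$ such that for every $b\in a^dR$ there exists $\alpha^*(X)\in\mathrm{EO}_{2n}(R[X],I[X])$ with $\alpha^*(0)=\mathrm{Id}$ whose image under the localisation map $\mathrm{EO}_{2n}(R[X])\to\mathrm{EO}_{2n}(R_a[X])$ is $\alpha(bX)$.
   Context: Let $\sigma$ be the permutation of $\{1,\dots,2n\}$ with $\sigma(2i)=2i-1$, $\sigma(2i-1)=2i$. For a commutative ring $A$, $z\in A$ and $1\le i\ne j\le 2n$ with $i\ne\sigma(j)$, $oe_{ij}(z)=1_{2n}+z e_{ij}-z e_{\sigma(j)\sigma(i)}$ (orthogonal with respect to $\widetilde\psi_n=\sum_{i=1}^n(e_{2i-1,2i}+e_{2i,2i-1})$), and $\mathrm{EO}_{2n}(A)$ is the group they generate. For an ideal $J$ of $A$, $\mathrm{EO}_{2n}(J)$ is generated by the $oe_{ij}(x)$, $x\in J$, and $\mathrm{EO}_{2n}(A,J)$ is the normal closure of $\mathrm{EO}_{2n}(J)$ in $\mathrm{EO}_{2n}(A)$. $R_a$ is the localisation at $\{a^i\}$, $I_a[X]=IR_a[X]$, $I[X]=IR[X]$. *)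

(* Defs.v *)
From HB Require Import structures.
From mathcomp Require Import all_boot all_order all_algebra.
Set Implicit Arguments. Unset Strict Implicit. Unset Printing Implicit Defensive.
Import GRing.Theory.
Local Open Scope ring_scope.

Definition is_ideal (A : comNzRingType) (J : A -> Prop) : Prop :=
  [/\ J 0, (forall x y, J x -> J y -> J (x + y)) & (forall r x, J x -> J (r * x))].

(* Extension J B of an ideal J of A along f : A -> B: finite sums sum f(x_i) b_i, x_i in J. *)
Definition ext_ideal (A B : comNzRingType) (f : A -> B) (J : A -> Prop) (y : B) : Prop :=
  exists s : seq (A * B), {in s, forall p, J p.1} /\ y = \sum_(p <- s) f p.1 * p.2.

(* phi : R -> S is a localisation of R at the powers of a (characterising property). *)
Definition is_localization (R S : comNzRingType) (a : R) (phi : {rmorphism R -> S}) : Prop :=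
  [/\ exists u, phi a * u = 1,
      (forall s : S, exists r k, s * phi a ^+ k = phi r)
    & (forall r, phi r = 0 -> exists N, a ^+ N * r = 0)].

(* 0-based version of sigma: 0<->1, 2<->3, ... (1-based: 2i-1 <-> 2i). *)
Definition sigman (k : nat) : nat := if odd k then k.-1 else k.+1.

Definition oe (A : comNzRingType) (n : nat) (i j : 'I_(n.*2)) (z : A) : 'M[A]_(n.*2) :=
  \matrix_(k, l) ((k == l)%:R + z * ((k == i) && (l == j))%:R
                  - z * (((k : nat) == sigman j) && ((l : nat) == sigman i))%:R).

Inductive gen_group (A : comNzRingType) (m : nat) (P : 'M[A]_m -> Prop) : 'M[A]_m -> Prop :=
| gen_one : gen_group P 1%:M
| gen_mul g M : P g -> gen_group P M -> gen_group P (g *m M)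
| gen_mulinv g h M : P g -> h *m g = 1%:M -> g *m h = 1%:M -> gen_group P M ->
    gen_group P (h *m M).

Definition oe_gen (A : comNzRingType) (n : nat) (J : A -> Prop) (M : 'M[A]_(n.*2)) : Prop :=
  exists (i j : 'I_(n.*2)) (z : A),
    [/\ i != j, (i : nat) != sigman j, J z & M = oe i j z].
Arguments oe_gen {A} n J M.

Definition EO (A : comNzRingType) (n : nat) : 'M[A]_(n.*2) -> Prop :=
  gen_group (oe_gen n (fun _ => True)).
Arguments EO {A} n _.

Definition EOI (A : comNzRingType) (n : nat) (J : A -> Prop) : 'M[A]_(n.*2) -> Prop :=
  gen_group (oe_gen n J).
Arguments EOI {A} n J _.

Definition EOrel (A : comNzRingType) (n : nat) (J : A -> Prop) : 'M[A]_(n.*2) -> Prop :=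
  gen_group (fun M => exists g g' h,
    [/\ EO n g, g' *m g = 1%:M, g *m g' = 1%:M, EOI n J h & M = g *m h *m g']).

Arguments EOrel {A} n J _.

(* Main.v *)
Require Import Defs.
From HB Require Import structures.
From mathcomp Require Import all_boot all_order all_algebra.
From mathcomp Require Import ring zify.
Import GRing.Theory.
Local Open Scope ring_scope.

Set Implicit Arguments. Unset Strict Implicit. Unset Printing Implicit Defensive.

Lemma sigmanK k : sigman (sigman k) = k.
Proof.
rewrite /sigman; case: k => [|k] //=; case: (boolP (odd k)) => Ho /=.
  by rewrite Ho /=.
by rewrite (negbTE Ho).
Qed.

Lemma sigman_lt n (i : 'I_(n.*2)) : (sigman i < n.*2)%N.
Proof.
have := ltn_ord i; rewrite /sigman; case: ifP => Ho; first by lia.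
rewrite -[X in (X < _)%N -> _](odd_double_half i) Ho /= add0n => H.
rewrite -[X in (X.+1 < _)%N](odd_double_half i) Ho /= add0n.
rewrite ltn_double in H. rewrite -doubleS leq_double. exact H.
Qed.

Section Sg.
Variable n : nat.
Definition sg (i : 'I_(n.*2)) : 'I_(n.*2) := Ordinal (sigman_lt i).
Lemma sgK : involutive sg.
Proof. by move=> i; apply/val_inj => /=; rewrite sigmanK. Qed.
Lemma sg_inj : injective sg. Proof. exact: inv_inj sgK. Qed.
Lemma sg_eq i j : (sg i == sg j) = (i == j). Proof. by apply/eqP/eqP => [/sg_inj|->]. Qed.
Lemma sg_neq i : (sg i == i) = false.
Proof.
apply/negbTE; rewrite -val_eqE /= /sigman; case: (val i) => [|k] //=.
case: ifP => _; lia.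
Qed.
Lemma sg_neq' i : (i == sg i) = false. Proof. by rewrite eq_sym sg_neq. Qed.
Lemma sg_val i : sigman (val i) = val (sg i). Proof. by []. Qed.
End Sg.
Lemma sg_eqL n (a b : 'I_(n.*2)) : (sg a == b) = (a == sg b).
Proof. by rewrite -sg_eq sgK. Qed.

Lemma mulmxMnl (A : comNzRingType) m (B C : 'M[A]_m) (t : nat) : (B *+ t) *m C = (B *m C) *+ t.
Proof. by elim: t => [|t IH]; rewrite ?mulr0n ?mul0mx // !mulrS mulmxDl IH. Qed.
Lemma mulmxMnr (A : comNzRingType) m (B C : 'M[A]_m) (t : nat) : B *m (C *+ t) = (B *m C) *+ t.
Proof. by elim: t => [|t IH]; rewrite ?mulr0n ?mulmx0 // !mulrS mulmxDr IH. Qed.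

Ltac bprep :=
  repeat match goal with H : is_true (~~ _) |- _ => move: H end;
  rewrite ?sg_eq ?sgK ?sg_eqL ?sg_eq ?sgK;
  repeat match goal with |- is_true (~~ (?x == ?y)) -> _ =>
    let H1 := fresh "F" in let H2 := fresh "F" in
    move=> /negbTE H1;
    let H3 := fresh "F" in let H4 := fresh "F" in
    have H2 : (y == x) = false := etrans (eq_sym y x) H1;
    have H3 : (sg x == sg y) = false := etrans (sg_eq x y) H1;
    have H4 : (sg y == sg x) = false := etrans (sg_eq y x) H2;
    rewrite ?sgK in H3 H4 end;
  rewrite ?eqxx ?sg_neq ?sg_neq';
  repeat match goal with H : (?x == ?y) = false |- context[?x == ?y] => rewrite H end;
  rewrite ?mulr0n ?mulr1n.

Ltac mxring := apply/matrixP => ? ?; rewrite !mxE; ring.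




Section Oe.
Variables (A : comNzRingType) (n : nat).
Local Notation m := (n.*2).
Local Notation E := (@delta_mx A m m).
Implicit Types i j k l h : 'I_m.
Definition T (i j : 'I_m) : 'M[A]_m := E i j - E (sg j) (sg i).
Definition valid (i j : 'I_m) := (i != j) && (i != sg j).

Lemma oeE i j z : oe i j z = 1%:M + z *: T i j.
Proof.
apply/matrixP => k l; rewrite !mxE -!val_eqE /=.
by rewrite mulrBr addrA.
Qed.

Ltac oexp := rewrite !oeE /T;
  repeat progress rewrite ?mulmxDl ?mulmxDr ?mulmxBl ?mulmxBr ?mul1mx ?mulmx1
     ?mulmxN ?mulNmx -?scalemxAl -?scalemxAr ?mulmxMnl ?mulmxMnr ?mul_delta_mx_cond.

Lemma TT i j k l : T i j *m T k l =
  E i l *+ (j == k) - E i (sg k) *+ (j == sg l) - E (sg j) l *+ (sg i == k)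
  + E (sg j) (sg k) *+ (i == l).
Proof.
rewrite /T mulmxBl !mulmxBr !mul_delta_mx_cond sg_eq.
by rewrite opprB !addrA addrAC.
Qed.

Lemma mul1p (x y : A) (B C : 'M[A]_m) :
  (1%:M + x *: B) *m (1%:M + y *: C) = 1%:M + x *: B + y *: C + (x * y) *: (B *m C).
Proof.
rewrite mulmxDl !mulmxDr !mul1mx !mulmx1 -scalemxAl -scalemxAr scalerA.
by rewrite !addrA; congr (_ + _); rewrite addrAC.
Qed.








Lemma oe_add i j (x y : A) : valid i j -> oe i j x *m oe i j y = oe i j (x + y).
Proof.
case/andP; rewrite !oeE mul1p TT => ? ?; bprep; mxring.
Qed.

Lemma oe0 i j : oe i j (0 : A) = 1%:M.
Proof. by rewrite oeE scale0r addr0. Qed.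

Lemma oeN i j (x : A) : valid i j -> oe i j x *m oe i j (- x) = 1%:M.
Proof. by move=> v; rewrite oe_add // subrr oe0. Qed.

Lemma oeN' i j (x : A) : valid i j -> oe i j (- x) *m oe i j x = 1%:M.
Proof. by move=> v; rewrite oe_add // addNr oe0. Qed.

Lemma oe_sg i j (z : A) : oe (sg j) (sg i) z = oe i j (- z).
Proof. rewrite !oeE /T !sgK; mxring. Qed.

Lemma valid_sg i j : valid i j -> valid (sg j) (sg i).
Proof. by case/andP => h1 h2; apply/andP; split; [rewrite sg_eq eq_sym | rewrite sgK eq_sym]. Qed.

Lemma oe_comm i j k l (c y : A) : valid i j -> valid k l ->
  j != k -> j != sg l -> i != l -> sg i != k ->
  oe i j c *m oe k l y = oe k l y *m oe i j c.
Proof.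
case/andP => ? ?; case/andP => ? ? ? ? ? ?.
rewrite !oeE !mul1p !TT; bprep; mxring.
Qed.





Lemma oe_C2 i j l (c y : A) : valid i j -> valid j l -> l != i -> l != sg i ->
  oe i j c *m oe j l y = oe j l y *m oe i l (c * y) *m oe i j c.
Proof.
case/andP => ? ?; case/andP => ? ? ? ?.
oexp; bprep; mxring.
Qed.

Lemma oe_C3 i j k (c y : A) : valid i j -> valid k i -> k != j -> k != sg j ->
  oe i j c *m oe k i y = oe k i y *m oe k j (- (c * y)) *m oe i j c.
Proof.
case/andP => ? ?; case/andP => ? ? ? ?.
oexp; bprep; mxring.
Qed.

Lemma oe_comm2 i j (c y : A) : valid i j -> valid j (sg i) ->
  oe i j c *m oe j (sg i) y = oe j (sg i) y *m oe i j c.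
Proof. case/andP => ? ?; case/andP => ? ?; oexp; bprep; mxring. Qed.

Lemma oe_comm3 i j (c y : A) : valid i j -> valid (sg j) i ->
  oe i j c *m oe (sg j) i y = oe (sg j) i y *m oe i j c.
Proof. case/andP => ? ?; case/andP => ? ?; oexp; bprep; mxring. Qed.

End Oe.

Lemma half_sigman k : (sigman k)./2 = k./2.
Proof.
rewrite /sigman; have E := odd_double_half k; case: ifP => Ho; rewrite Ho in E.
  by rewrite -E /= add0n doubleK uphalf_double.
by rewrite -E /= add0n uphalf_double doubleK.
Qed.

Lemma exists_h n (i j : 'I_(n.*2)) : (3 <= n)%N ->
  exists h : 'I_(n.*2), [/\ h != i, h != j, h != sg i & h != sg j].
Proof.
move=> n3.
have [p [p3 pi pj]] : exists p, [/\ (p < 3)%N, p != (val i)./2 & p != (val j)./2].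
  case E0: ((0 != (val i)./2) && (0 != (val j)./2))%N.
    by exists 0%N; move/andP: E0 => [? ?].
  case E1: ((1 != (val i)./2) && (1 != (val j)./2))%N.
    by exists 1%N; move/andP: E1 => [? ?].
  exists 2%N; move: E0 E1 => /negbT; rewrite negb_and !negbK => H0 /negbT.
  rewrite negb_and !negbK => H1.
  by case/orP: H0 => /eqP H0; case/orP: H1 => /eqP H1; split; lia.
have hlt : (p.*2 < n.*2)%N by rewrite ltn_double; lia.
exists (Ordinal hlt); split; apply/eqP => /(congr1 (fun x : 'I_(n.*2) => (val x)./2)) /=;
  rewrite doubleK ?half_sigman => E; [move: pi|move: pj|move: pi|move: pj]; by rewrite E eqxx.
Qed.

Section Oe2.
Variables (A : comNzRingType) (n : nat).
Local Notation m := (n.*2).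
Implicit Types i j k l h : 'I_m.
Definition nice i j (c : A) k l (y : A) := exists p q (z : int), valid p q /\
  oe i j c *m oe k l y = oe k l y *m oe p q (z%:~R * (c * y)) *m oe i j c.

Lemma nice_sg i j c k l y : nice i j c (sg l) (sg k) (- y) -> nice i j c k l y.
Proof.
case=> p [q [z [vpq E1]]]; exists p, q, (- z); split => //.
by move: E1; rewrite oe_sg opprK !mulrN => ->; rewrite mulrNz mulNr.
Qed.

Lemma nice_0 i j c k l y : valid i j ->
  oe i j c *m oe k l y = oe k l y *m oe i j c -> nice i j c k l y.
Proof.
move=> v E1; exists i, j, 0; split => //.
by rewrite mul0r oe0 mulmx1.
Qed.

Lemma nice_jk i j l c y : valid i j -> valid j l -> l != i -> nice i j c j l y.
Proof.
move=> vij vjl li; case: (eqVneq l (sg i)) => [E|lsi].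
  by subst l; apply: nice_0 => //; apply: oe_comm2.
exists i, l, 1; split.
  apply/andP; split; first by rewrite eq_sym.
  by rewrite eq_sym sg_eqL.
by rewrite mul1r; apply: oe_C2.
Qed.

Lemma nice_il i j k c y : valid i j -> valid k i -> k != j -> nice i j c k i y.
Proof.
move=> vij vki kj; case: (eqVneq k (sg j)) => [E|ksj].
  by subst k; apply: nice_0 => //; apply: oe_comm3.
exists k, j, (-1); split.
  by apply/andP; split.
by rewrite mulrN1z mulN1r; apply: oe_C3.
Qed.

Lemma nice_all i j k l c y : valid i j -> valid k l ->
  ~~ ((k == j) && (l == i)) -> ~~ ((k == sg i) && (l == sg j)) -> nice i j c k l y.
Proof.
move=> vij vkl o1 o2.
have vsg := valid_sg vkl.
case: (eqVneq j k) => [jk|jk].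
  subst k; apply: nice_jk => //; apply/eqP => li; move: o1; by rewrite li !eqxx.
case: (eqVneq j (sg l)) => [jsl|jsl].
  apply: nice_sg; rewrite -jsl; apply: nice_jk => //; first by rewrite jsl.
  apply/eqP => ski; move: o2.
  have -> : k = sg i by rewrite -ski sgK.
  have -> : l = sg j by rewrite jsl sgK.
  by rewrite !eqxx.
case: (eqVneq i l) => [il|il].
  subst l; apply: nice_il => //; apply/eqP => kj; move: o1; by rewrite kj !eqxx.
case: (eqVneq (sg i) k) => [sik|sik].
  apply: nice_sg; rewrite -sik sgK; apply: nice_il => //.
    by move: vsg; rewrite -sik sgK.
  apply/eqP => slj; move: o2.
  have -> : l = sg j by rewrite -slj sgK.
  by rewrite -sik !eqxx.
by apply: nice_0 => //; apply: oe_comm.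
Qed.

Lemma oe_split i j h (u v : A) : valid i j -> h != i -> h != j -> h != sg i -> h != sg j ->
  oe j i (u * v) = oe h i (- v) *m oe j h u *m oe h i v *m oe j h (- u).
Proof.
move=> vij hi hj hsi hsj.
have vjh : valid j h by apply/andP; split; [rewrite eq_sym | rewrite -sg_eqL eq_sym].
have vhi : valid h i by apply/andP.
have ij : i != j by case/andP: vij.
have isj : i != sg j by case/andP: vij.
rewrite -!mulmxA (mulmxA (oe j h u)) oe_C2 // -!mulmxA oeN //.
by rewrite mulmx1 !mulmxA oeN' // mul1mx.
Qed.

Lemma oe_conj_p i j h (c u : A) : valid i j -> h != i -> h != j -> h != sg i -> h != sg j ->
  oe i j c *m oe j h u = oe j h u *m oe i h (c * u) *m oe i j c.
Proof.
move=> vij hi hj hsi hsj; apply: oe_C2 => //.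
by apply/andP; split; [rewrite eq_sym | rewrite -sg_eqL eq_sym].
Qed.

Lemma oe_conj_q i j h (c v : A) : valid i j -> h != i -> h != j -> h != sg i -> h != sg j ->
  oe i j c *m oe h i v = oe h i v *m oe h j (- (c * v)) *m oe i j c.
Proof. by move=> vij hi hj hsi hsj; apply: oe_C3 => //; apply/andP. Qed.

Lemma valid_ih i h : h != i -> h != sg i -> valid i h.
Proof. by move=> ? ?; apply/andP; split; [rewrite eq_sym | rewrite -sg_eqL eq_sym]. Qed.
Lemma valid_hi i h : h != i -> h != sg i -> valid h i.
Proof. by move=> ? ?; apply/andP. Qed.

End Oe2.

Section Groups.
Variables (A : comNzRingType) (m : nat).
Implicit Types (P Q : 'M[A]_m -> Prop) (M X Y Z : 'M[A]_m).

Lemma inv_uniq X Y Z : X *m Y = 1%:M -> Z *m X = 1%:M -> Z = Y.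
Proof. by move=> h1 h2; rewrite -[Z]mulmx1 -h1 mulmxA h2 mul1mx. Qed.

Lemma gg_mul P X Y : gen_group P X -> gen_group P Y -> gen_group P (X *m Y).
Proof.
elim=> [|g M Pg _ IH|g h M Pg hg gh _ IH] gY; first by rewrite mul1mx.
  by rewrite -mulmxA; apply: gen_mul => //; apply: IH.
by rewrite -mulmxA; apply: gen_mulinv hg gh _ => //; apply: IH.
Qed.

Lemma gg_gen P g : P g -> gen_group P g.
Proof. by move=> Pg; rewrite -[g]mulmx1; apply: gen_mul => //; apply: gen_one. Qed.

Lemma gg_geninv P g h : P g -> h *m g = 1%:M -> g *m h = 1%:M -> gen_group P h.
Proof. by move=> Pg hg gh; rewrite -[h]mulmx1; apply: gen_mulinv hg gh _ => //; apply: gen_one. Qed.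

Lemma gg_sub P Q X : (forall g, P g -> Q g) -> gen_group P X -> gen_group Q X.
Proof.
move=> PQ; elim=> [|g M Pg _ IH|g h M Pg hg gh _ IH]; first exact: gen_one.
  by apply: gen_mul => //; apply: PQ.
by apply: gen_mulinv hg gh IH; apply: PQ.
Qed.

Lemma gg_inv P X : (forall g, P g -> exists h, h *m g = 1%:M /\ g *m h = 1%:M) ->
  gen_group P X -> exists X', [/\ gen_group P X', X *m X' = 1%:M & X' *m X = 1%:M].
Proof.
move=> Pinv; elim=> [|g M Pg _ [M' [gM' h1 h2]]|g h M Pg hg gh _ [M' [gM' h1 h2]]].
- by exists 1%:M; split; rewrite ?mul1mx //; apply: gen_one.
- have [h [hg gh]] := Pinv _ Pg.
  exists (M' *m h); split.
  + by apply: gg_mul => //; apply: gg_geninv Pg hg gh.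
  + by rewrite mulmxA -(mulmxA g) h1 mulmx1.
  + by rewrite mulmxA -(mulmxA M') hg mulmx1.
- exists (M' *m g); split.
  + by apply: gg_mul => //; apply: gg_gen.
  + by rewrite mulmxA -(mulmxA h) h1 mulmx1.
  + by rewrite mulmxA -(mulmxA M') gh mulmx1.
Qed.

End Groups.

Section Words.
Variables (A : comNzRingType) (n : nat).
Local Notation m := (n.*2).
Implicit Types (K : A -> Prop) (M : 'M[A]_m).

Inductive wordP K : nat -> 'M[A]_m -> Prop :=
| wp0 : wordP K 0 1%:M
| wpS i j z k M : valid i j -> K z -> wordP K k M -> wordP K k.+1 (oe i j z *m M).

Lemma oe_gen_valid K g : oe_gen n K g -> exists i j z, [/\ valid i j, K z & g = oe i j z].
Proof.
case=> i [j [z [h1 h2 h3 ->]]]; exists i, j, z; split => //.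
by apply/andP; split.
Qed.

Lemma valid_oe_gen K i j z : valid i j -> K z -> oe_gen n K (oe i j z).
Proof.
case/andP => h1 h2 Kz; exists i, j, z; split => //.
Qed.

Lemma wordP_EOI K k M : wordP K k M -> EOI n K M.
Proof.
elim=> [|i j z k' M' v Kz _ IH]; first exact: gen_one.
by apply: gen_mul => //; apply: valid_oe_gen.
Qed.

Lemma EOI_wordP K M : (forall z, K z -> K (- z)) -> EOI n K M -> exists k, wordP K k M.
Proof.
move=> KN; elim=> [|g M' Pg _ [k IH]|g h M' Pg hg gh _ [k IH]].
- by exists 0%N; apply: wp0.
- have [i [j [z [v Kz ->]]]] := oe_gen_valid Pg.
  by exists k.+1; apply: wpS.
- have [i [j [z [v Kz E]]]] := oe_gen_valid Pg.
  have -> : h = oe i j (- z).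
    by apply: (inv_uniq (X := g)) => //; rewrite E oeN.
  by exists k.+1; apply: wpS => //; apply: KN.
Qed.

Lemma wordP_sub K K' k M : (forall z, K z -> K' z) -> wordP K k M -> wordP K' k M.
Proof. move=> KK; elim=> [|*]; [exact: wp0 | apply: wpS; auto]. Qed.

Lemma wordP_mul K k1 k2 M1 M2 : wordP K k1 M1 -> wordP K k2 M2 -> wordP K (k1 + k2) (M1 *m M2).
Proof.
elim=> [|i j z k M v Kz _ IH] w2; first by rewrite mul1mx.
by rewrite -mulmxA addSn; apply: wpS => //; apply: IH.
Qed.

Lemma wordP_inv K k M : (forall z, K z -> K (- z)) -> wordP K k M ->
  exists M', [/\ wordP K k M', M *m M' = 1%:M & M' *m M = 1%:M].
Proof.
move=> KN; elim=> [|i j z k' M' v Kz _ [N [wN h1 h2]]].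
  by exists 1%:M; split; rewrite ?mul1mx //; apply: wp0.
exists (N *m oe i j (- z)); split.
- rewrite -addn1; apply: wordP_mul => //.
  by rewrite -[oe i j _]mulmx1; apply: wpS => //; [apply: KN | apply: wp0].
- by rewrite mulmxA -(mulmxA (oe i j z)) h1 mulmx1 oeN.
- by rewrite mulmxA -(mulmxA N) oeN' // mulmx1.
Qed.

End Words.

Lemma map_oe (A B : comNzRingType) (f : {rmorphism A -> B}) n (i j : 'I_(n.*2)) z :
  map_mx f (oe i j z) = oe i j (f z).
Proof. by apply/matrixP => k l; rewrite !mxE rmorphB rmorphD !rmorphM !rmorph_nat. Qed.

Lemma wordP_map (A B : comNzRingType) (f : {rmorphism A -> B}) (n : nat) (K : A -> Prop) (K' : B -> Prop) k (M : 'M[A]_(n.*2)) :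
  (forall z, K z -> K' (f z)) -> wordP K k M -> wordP K' k (map_mx f M).
Proof.
move=> KK; elim=> [|i j z k' M' v Kz _ IH]; first by rewrite map_mx1; apply: wp0.
by rewrite map_mxM map_oe; apply: wpS => //; apply: KK.
Qed.

Definition predTT (A : Type) : A -> Prop := fun _ => True.

Lemma is_ideal_T (A : comNzRingType) : is_ideal (@predTT A).
Proof. by []. Qed.

Lemma jN (A : comNzRingType) (J : A -> Prop) x : is_ideal J -> J x -> J (- x).
Proof. by case=> _ _ hM Jx; rewrite -mulN1r; apply: hM. Qed.
Lemma jM (A : comNzRingType) (J : A -> Prop) r x : is_ideal J -> J x -> J (r * x).
Proof. by case=> _ _ hM Jx; apply: hM. Qed.
Lemma jMr (A : comNzRingType) (J : A -> Prop) r x : is_ideal J -> J x -> J (x * r).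
Proof. by move=> hJ Jx; rewrite mulrC; apply: jM. Qed.
Lemma jD (A : comNzRingType) (J : A -> Prop) x y : is_ideal J -> J x -> J y -> J (x + y).
Proof. by case=> _ hD _; apply: hD. Qed.
Lemma j0 (A : comNzRingType) (J : A -> Prop) : is_ideal J -> J 0.
Proof. by case. Qed.

Section Levels.
Variables (A : comNzRingType) (n : nat) (al : A).
Local Notation m := (n.*2).
Implicit Types (J : A -> Prop) (M X Y W G H : 'M[A]_m).

Definition levS N J : A -> Prop := fun x => exists t, J t /\ x = al ^+ N * t.
Definition lev N J : 'M[A]_m -> Prop := EOI n (levS N J).
Definition RLgen N J M := exists G G' H,
  [/\ lev N (@predTT A) G, G' *m G = 1%:M, G *m G' = 1%:M, lev N J H & M = G *m H *m G'].
Definition RL N J := gen_group (RLgen N J).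

Lemma oe_inv_ex (K : A -> Prop) g : oe_gen n K g -> exists h, h *m g = 1%:M /\ g *m h = 1%:M.
Proof.
move/oe_gen_valid => [i [j [z [v _ ->]]]]; exists (oe i j (- z)).
by rewrite oeN' // oeN.
Qed.

Lemma EOI_inv (K : A -> Prop) X : EOI n K X -> exists X', [/\ EOI n K X', X *m X' = 1%:M & X' *m X = 1%:M].
Proof. by apply: gg_inv => g; apply: oe_inv_ex. Qed.

Lemma lev_letter N J i j t : valid i j -> J t -> lev N J (oe i j (al ^+ N * t)).
Proof. by move=> v Jt; apply: gg_gen; apply: valid_oe_gen => //; exists t. Qed.

Lemma lev_mul N J X Y : lev N J X -> lev N J Y -> lev N J (X *m Y).
Proof. exact: gg_mul. Qed.

Lemma lev_inv N J X : lev N J X -> exists X', [/\ lev N J X', X *m X' = 1%:M & X' *m X = 1%:M].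
Proof. exact: EOI_inv. Qed.

Lemma lev1 N J : lev N J 1%:M. Proof. exact: gen_one. Qed.

Lemma EOI_sub (K K' : A -> Prop) X : (forall z, K z -> K' z) -> EOI n K X -> EOI n K' X.
Proof.
move=> KK; apply: gg_sub => g /oe_gen_valid [i [j [z [v Kz ->]]]].
by apply: valid_oe_gen => //; apply: KK.
Qed.

Lemma lev_mono N N' J X : is_ideal J -> (N' <= N)%N -> lev N J X -> lev N' J X.
Proof.
move=> hJ le; apply: EOI_sub => z [t [Jt ->]]; exists (al ^+ (N - N') * t); split.
  exact: jM.
by rewrite mulrA -exprD subnKC.
Qed.

Lemma lev_subJ N J J' X : (forall z, J z -> J' z) -> lev N J X -> lev N J' X.
Proof. by move=> JJ; apply: EOI_sub => z [t [Jt ->]]; exists t; split => //; apply: JJ. Qed.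

Lemma lev_T N J X : lev N J X -> lev N (@predTT A) X.
Proof. by apply: lev_subJ. Qed.

Lemma RLgen_inv N J g : RLgen N J g -> exists h, h *m g = 1%:M /\ g *m h = 1%:M.
Proof.
case=> G [G' [H [lG h1 h2 lH ->]]].
have [H' [_ e1 e2]] := lev_inv lH.
exists (G *m H' *m G'); split.
  by rewrite !mulmxA -(mulmxA _ G') h1 mulmx1 -(mulmxA _ H') e2 mulmx1.
by rewrite !mulmxA -(mulmxA _ G') h1 mulmx1 -(mulmxA _ H) e1 mulmx1.
Qed.

Lemma RL_lev N J H : lev N J H -> RL N J H.
Proof.
move=> lH; apply: gg_gen; exists 1%:M, 1%:M, H; split; rewrite ?mul1mx ?mulmx1 //.
exact: lev1.
Qed.

Lemma RL1 N J : RL N J 1%:M. Proof. exact: gen_one. Qed.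

Lemma RL_mul N J X Y : RL N J X -> RL N J Y -> RL N J (X *m Y).
Proof. exact: gg_mul. Qed.

Lemma RL_inv N J X : RL N J X -> exists X', [/\ RL N J X', X *m X' = 1%:M & X' *m X = 1%:M].
Proof. by apply: gg_inv => g; apply: RLgen_inv. Qed.

Lemma RLgen_conj N J X X' g : lev N (@predTT A) X -> X' *m X = 1%:M -> X *m X' = 1%:M ->
  RLgen N J g -> RLgen N J (X *m g *m X').
Proof.
move=> lX h1 h2 [G [G' [H [lG e1 e2 lH ->]]]].
exists (X *m G), (G' *m X'), H; split => //.
- exact: lev_mul.
- by rewrite mulmxA -(mulmxA G') h1 mulmx1.
- by rewrite mulmxA -(mulmxA X) e2 mulmx1.
- by rewrite !mulmxA.
Qed.

Lemma RL_conj N J X X' W : lev N (@predTT A) X -> X' *m X = 1%:M -> X *m X' = 1%:M ->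
  RL N J W -> RL N J (X *m W *m X').
Proof.
move=> lX h1 h2; elim=> [|g M Pg _ IH|g h M Pg hg gh _ IH].
- by rewrite mulmx1 h2; exact: RL1.
- have -> : X *m (g *m M) *m X' = (X *m g *m X') *m (X *m M *m X').
    by rewrite !mulmxA -(mulmxA _ X' X) h1 mulmx1.
  by apply: RL_mul => //; apply: gg_gen; apply: RLgen_conj.
- have -> : X *m (h *m M) *m X' = (X *m h *m X') *m (X *m M *m X').
    by rewrite !mulmxA -(mulmxA _ X' X) h1 mulmx1.
  apply: RL_mul => //; apply: (gg_geninv (g := X *m g *m X')).
  + exact: RLgen_conj.
  + by rewrite !mulmxA -(mulmxA _ X' X) h1 mulmx1 -(mulmxA _ h) hg mulmx1.
  + by rewrite !mulmxA -(mulmxA _ X' X) h1 mulmx1 -(mulmxA _ g) gh mulmx1.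
Qed.

Lemma RL_mono N N' J X : is_ideal J -> (N' <= N)%N -> RL N J X -> RL N' J X.
Proof.
move=> hJ le; apply: gg_sub => g [G [G' [H [lG h1 h2 lH ->]]]].
exists G, G', H; split => //; first exact: (lev_mono (@is_ideal_T A)) lG.
exact: lev_mono lH.
Qed.

Lemma lev_inv_uniq N J X X' : lev N J X -> X' *m X = 1%:M -> lev N J X'.
Proof.
move=> lX h; have [X'' [lX'' e1 e2]] := lev_inv lX.
by rewrite (inv_uniq e1 h).
Qed.

Lemma RLgen_lev N J g : RLgen N J g -> lev N (@predTT A) g.
Proof.
case=> G [G' [H [lG h1 h2 lH ->]]].
apply: lev_mul; first apply: lev_mul => //; first exact: lev_T lH.
exact: lev_inv_uniq lG h1.
Qed.

Lemma RL_abs N J X : RL N J X -> lev N (@predTT A) X.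
Proof.
elim=> [|g M Pg _ IH|g h M Pg hg gh _ IH]; first exact: lev1.
  by apply: lev_mul => //; apply: RLgen_lev Pg.
apply: lev_mul => //; apply: lev_inv_uniq hg.
exact: RLgen_lev Pg.
Qed.

Lemma RL_mix N J X R r : lev N (@predTT A) X -> RL N J R -> RL N J r ->
  exists R', RL N J R' /\ R *m X *m r = R' *m X.
Proof.
move=> lX lR lr; have [X' [lX' e1 e2]] := lev_inv lX.
exists (R *m (X *m r *m X')); split.
  by apply: RL_mul => //; apply: RL_conj.
by rewrite !mulmxA -(mulmxA _ X' X) e2 mulmx1.
Qed.

Lemma RL_EOrel J X : RL 0 J X -> EOrel n J X.
Proof.
apply: gg_sub => g [G [G' [H [lG h1 h2 lH ->]]]].
exists G, G', H; split => //.
  by apply: EOI_sub lG.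
by apply: EOI_sub lH => z [t [Jt ->]]; rewrite expr0 mul1r.
Qed.

End Levels.

Section Mix.
Variables (A : comNzRingType) (n : nat) (al : A).
Local Notation m := (n.*2).
Implicit Types (J : A -> Prop) (M X Y W G H : 'M[A]_m).

Lemma mix4 N J (a1 a2 a3 a4 a5 r1 r2 r3 r4 : 'M[A]_m) :
  lev al N (@predTT A) a1 -> lev al N (@predTT A) a2 -> lev al N (@predTT A) a3 ->
  lev al N (@predTT A) a4 ->
  RL al N J r1 -> RL al N J r2 -> RL al N J r3 -> RL al N J r4 ->
  a1 *m a2 *m a3 *m a4 *m a5 = 1%:M ->
  RL al N J (a1 *m r1 *m a2 *m r2 *m a3 *m r3 *m a4 *m r4 *m a5).
Proof.
move=> l1 l2 l3 l4 h1 h2 h3 h4 e.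
have [R1 [hR1 e1]] := RL_mix l1 (RL1 n al N J) h1.
rewrite mul1mx in e1; rewrite e1 -(mulmxA R1).
have [R2 [hR2 e2]] := RL_mix (lev_mul l1 l2) hR1 h2; rewrite e2 -(mulmxA R2).
have [R3 [hR3 e3]] := RL_mix (lev_mul (lev_mul l1 l2) l3) hR2 h3; rewrite e3 -(mulmxA R3).
have [R4 [hR4 e4]] := RL_mix (lev_mul (lev_mul (lev_mul l1 l2) l3) l4) hR3 h4.
by rewrite e4 -(mulmxA R4) e mulmx1.
Qed.

End Mix.

Lemma intertw (B : comNzRingType) m (e X X' Y Y' : 'M[B]_m) :
  e *m X = Y *m e -> e *m X' = Y' *m e -> e *m (X *m X') = (Y *m Y') *m e.
Proof. by move=> h1 h2; rewrite mulmxA h1 -mulmxA h2 mulmxA. Qed.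

Section Engine.
Variables (A B : comNzRingType) (psi : {rmorphism A -> B}) (n : nat) (al : A).
Hypothesis n3 : (3 <= n)%N.
Local Notation m := (n.*2).
Local Notation Ps := (map_mx psi).
Local Notation lam := (psi al).
Implicit Types (i j p q h : 'I_m) (c : B) (r t : A).

Lemma lev_letter' N M J i j t : is_ideal J -> (M <= N)%N -> valid i j -> J t ->
  lev al M J (oe i j (al ^+ N * t)).
Proof.
move=> hJ le v Jt; have -> : al ^+ N * t = al ^+ M * (al ^+ (N - M) * t).
  by rewrite mulrA -exprD subnKC.
by apply: lev_letter => //; exact: jM.
Qed.

Lemma engine_nice i j c k r p q N M t :
  valid i j -> c * lam ^+ k = psi r -> (M + k <= N)%N -> valid p q ->
  nice i j c p q (psi (al ^+ N * t)) ->
  exists W, [/\ oe i j c *m Ps (oe p q (al ^+ N * t)) = Ps W *m oe i j c,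
     (forall J, is_ideal J -> J t -> RL al M J W) &
     (forall J g', is_ideal J -> J r -> oe p q (al ^+ N * t) *m g' = 1%:M ->
        RL al M J (W *m g'))].
Proof.
move=> vij hc le vpq [p' [q' [z [vpq' E]]]].
set g := oe p q (al ^+ N * t).
set x2 := r * (z%:~R * al ^+ (N - k - M) * t).
exists (g *m oe p' q' (al ^+ M * x2)); split.
- rewrite map_mxM !map_oe E; congr (_ *m _ *m _); congr oe.
  rewrite /x2 !rmorphM !rmorphXn rmorph_int -hc.
  have -> : lam ^+ N = lam ^+ M * lam ^+ k * lam ^+ (N - k - M).
    by rewrite -!exprD; congr (_ ^+ _); lia.
  ring.
- move=> J hJ Jt; apply: RL_lev; apply: lev_mul.
    by apply: lev_letter' => //; lia.
  apply: lev_letter => //; rewrite /x2; apply: jM => //; exact: jM.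
- move=> J g' hJ Jr gg'.
  have eg' : g' = oe p q (- (al ^+ N * t)).
    by apply: esym; apply: (inv_uniq gg'); rewrite oeN'.
  apply: RL_conj.
  + by apply: (lev_letter' (@is_ideal_T A)) => //; lia.
  + by rewrite eg' oeN'.
  + exact: gg'.
  + apply: RL_lev; apply: lev_letter => //; rewrite /x2; exact: jMr hJ Jr.
Qed.

Lemma lev_letterN N M J i j t : is_ideal J -> (M <= N)%N -> valid i j -> J t ->
  lev al M J (oe i j (- (al ^+ N * t))).
Proof. by move=> hJ le v Jt; rewrite -mulrN; apply: lev_letter' => //; exact: jN. Qed.

Lemma oe_comm_h h i j (x y : A) : valid i j -> h != i -> h != j -> h != sg i -> h != sg j ->
  oe h i x *m oe h j y = oe h j y *m oe h i x.
Proof.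
move=> vij hi hj hsi hsj; case/andP: vij => ij isj.
apply: oe_comm => //; try exact: valid_hi; try (by rewrite eq_sym); by rewrite sg_neq.
Qed.

Lemma engine_opp i j c k r N M t :
  valid i j -> c * lam ^+ k = psi r -> (2 * (M + k) <= N)%N ->
  exists W, [/\ oe i j c *m Ps (oe j i (al ^+ N * t)) = Ps W *m oe i j c,
     (forall J, is_ideal J -> J t -> RL al M J W) &
     (forall J g', is_ideal J -> J r -> oe j i (al ^+ N * t) *m g' = 1%:M ->
        RL al M J (W *m g'))].
Proof.
move=> vij hc le.
have [h [hi hj hsi hsj]] := exists_h i j n3.
set u := al ^+ (N - (M + k)) * t.
set v := al ^+ (M + k) * 1.
set cu := r * (al ^+ (N - 2 * (M + k)) * t).
set qi := oe h i (- v); set qi' := oe h j (al ^+ M * r).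
set p := oe j h u; set p' := oe i h (al ^+ M * cu).
set q := oe h i v; set q' := oe h j (- (al ^+ M * r)).
set pi := oe j h (- u); set pi' := oe i h (- (al ^+ M * cu)).
have vji : valid j i.
  by case/andP: vij => h1 h2; apply/andP; split; [rewrite eq_sym | rewrite -sg_eqL eq_sym].
have vhi := valid_hi hi hsi.
have vhj := valid_hi hj hsj.
have vih := valid_ih hi hsi.
have vjh := valid_ih hj hsj.
have eg : oe j i (al ^+ N * t) = qi *m p *m q *m pi.
  rewrite /qi /p /q /pi -oe_split //; congr oe; rewrite /u /v mulr1 mulrAC -exprD subnK //.
  lia.
have Eqi : oe i j c *m Ps qi = Ps (qi *m qi') *m oe i j c.
  rewrite map_mxM !map_oe oe_conj_q //; congr (_ *m _ *m _); congr oe.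
  by rewrite /v !rmorphN !rmorphM !rmorphXn rmorph1 -hc exprD; ring.
have Ep : oe i j c *m Ps p = Ps (p *m p') *m oe i j c.
  rewrite map_mxM !map_oe oe_conj_p //; congr (_ *m _ *m _); congr oe.
  rewrite /u /cu !rmorphM !rmorphXn -hc.
  have -> : lam ^+ (N - (M + k)) = lam ^+ M * lam ^+ k * lam ^+ (N - 2 * (M + k)).
    by rewrite -!exprD; congr (_ ^+ _); lia.
  ring.
have Eq : oe i j c *m Ps q = Ps (q *m q') *m oe i j c.
  rewrite map_mxM !map_oe oe_conj_q //; congr (_ *m _ *m _); congr oe.
  by rewrite /v !rmorphN !rmorphM !rmorphXn rmorph1 -hc exprD; ring.
have Epi : oe i j c *m Ps pi = Ps (pi *m pi') *m oe i j c.
  rewrite map_mxM !map_oe oe_conj_p //; congr (_ *m _ *m _); congr oe.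
  rewrite /u /cu !rmorphN !rmorphM !rmorphXn -hc.
  have -> : lam ^+ (N - (M + k)) = lam ^+ M * lam ^+ k * lam ^+ (N - 2 * (M + k)).
    by rewrite -!exprD; congr (_ ^+ _); lia.
  ring.
have lv : (M <= M + k)%N by lia.
have lu : (M <= N - (M + k))%N by lia.
have lN : (M <= N)%N by lia.
have hT := @is_ideal_T A.
have lqi : lev al M (@predTT A) qi by apply: lev_letterN.
have lq : lev al M (@predTT A) q by apply: lev_letter'.
have lp : lev al M (@predTT A) p by apply: lev_letter'.
have lpi : lev al M (@predTT A) pi by apply: lev_letterN.
have c1 : qi' *m q = q *m qi' by rewrite /qi' /q -oe_comm_h.
have c2 : q' *m qi = qi *m q' by rewrite /q' /qi -oe_comm_h.
have eQ1 : (qi *m qi') *m (q *m q') = 1%:M.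
  rewrite -mulmxA (mulmxA qi') c1 -(mulmxA q) mulmxA.
  by rewrite /qi /q oeN' // mul1mx /qi' /q' oeN.
have eQ2 : (q *m q') *m (qi *m qi') = 1%:M.
  rewrite -mulmxA (mulmxA q') c2 -(mulmxA qi) mulmxA.
  by rewrite /qi /q oeN // mul1mx /qi' /q' oeN'.
exists ((qi *m qi') *m (p *m p') *m (q *m q') *m (pi *m pi')); split.
- rewrite eg; have := intertw (intertw (intertw Eqi Ep) Eq) Epi.
  by rewrite !map_mxM.
- move=> J hJ Jt; apply: RL_mul; first apply: RL_conj => //.
  + by apply: lev_mul => //; apply: lev_letter.
  + apply: RL_lev; apply: lev_mul; first by apply: lev_letter'.
    by apply: lev_letter => //; rewrite /cu; apply: jM => //; apply: jM.
  + apply: RL_lev; apply: lev_mul; first by apply: lev_letterN.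
    by rewrite /pi' -mulrN; apply: lev_letter => //; apply: jN => //; rewrite /cu; apply: jM => //; apply: jM.
- move=> J g' hJ Jr gg'.
  have hr : J cu by rewrite /cu; exact: jMr hJ Jr.
  have eg' : g' = oe j i (- (al ^+ N * t)).
    by apply: esym; apply: (inv_uniq gg'); rewrite oeN'.
  have -> : (qi *m qi') *m (p *m p') *m (q *m q') *m (pi *m pi') *m g' =
     qi *m qi' *m p *m p' *m q *m q' *m pi *m pi' *m g' by rewrite !mulmxA.
  apply: mix4 => //.
  + by apply: RL_lev; apply: lev_letter.
  + by apply: RL_lev; apply: lev_letter.
  + by apply: RL_lev; rewrite /q' -mulrN; apply: lev_letter => //; apply: jN.
  + by apply: RL_lev; rewrite /pi' -mulrN; apply: lev_letter => //; apply: jN.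
  + by rewrite -eg.
Qed.

End Engine.

Lemma lev_ind (A : comNzRingType) n (al : A) N (J : A -> Prop) (P : 'M[A]_(n.*2) -> Prop) :
  is_ideal J -> P 1%:M ->
  (forall p q t X, valid p q -> J t -> lev al N J X -> P X -> P (oe p q (al ^+ N * t) *m X)) ->
  forall X, lev al N J X -> P X.
Proof.
move=> hJ P1 PS X; elim=> [|g M Pg lM IH|g h M Pg hg gh lM IH] //.
  have [i [j [z [v [t [Jt ez]] ->]]]] := oe_gen_valid Pg.
  by rewrite ez; apply: PS.
have [i [j [z [v [t [Jt ez]] eg]]]] := oe_gen_valid Pg.
have -> : h = oe i j (al ^+ N * (- t)).
  by apply: (inv_uniq (X := g)) => //; rewrite eg ez mulrN oeN.
by apply: PS => //; apply: jN.
Qed.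

Fixpoint Fw (k m M : nat) : nat := if m is m'.+1 then Fw k m' (2 * (M + k)) else M.

Lemma Fw_ge k m M : (M <= Fw k m M)%N.
Proof. by elim: m M => [|m IH] M //=; apply: leq_trans (IH _); lia. Qed.

Section Engine2.
Variables (A B : comNzRingType) (psi : {rmorphism A -> B}) (n : nat) (al : A).
Hypothesis n3 : (3 <= n)%N.
Local Notation m := (n.*2).
Local Notation Ps := (map_mx psi).
Local Notation lam := (psi al).
Implicit Types (i j p q h : 'I_m) (c : B) (r t : A).

Lemma engine i j c k r p q N M t :
  valid i j -> c * lam ^+ k = psi r -> (2 * (M + k) <= N)%N -> valid p q ->
  exists W, [/\ oe i j c *m Ps (oe p q (al ^+ N * t)) = Ps W *m oe i j c,
     (forall J, is_ideal J -> J t -> RL al M J W) &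
     (forall J g', is_ideal J -> J r -> oe p q (al ^+ N * t) *m g' = 1%:M ->
        RL al M J (W *m g'))].
Proof.
move=> vij hc le vpq.
case: (boolP ((p == j) && (q == i))) => [/andP[/eqP-> /eqP->]|o1].
  exact: (@engine_opp _ _ psi n al n3 i j c k r N M t vij hc le).
case: (boolP ((p == sg i) && (q == sg j))) => [/andP[/eqP-> /eqP->]|o2].
  rewrite (_ : oe (sg i) (sg j) (al ^+ N * t) = oe j i (al ^+ N * (- t))); last first.
    by rewrite oe_sg mulrN.
  have [W [h1 h2 h3]] := @engine_opp _ _ psi n al n3 i j c k r N M (- t) vij hc le.
  by exists W; split => // J hJ Jt; apply: h2 => //; exact: jN.
have le' : (M + k <= N)%N by lia.
apply: (engine_nice n3 vij hc le' vpq).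
exact: nice_all.
Qed.

Lemma conj_lev i j c k r N M J X : valid i j -> c * lam ^+ k = psi r ->
  (2 * (M + k) <= N)%N -> is_ideal J -> lev al N J X ->
  exists W, RL al M J W /\ oe i j c *m Ps X = Ps W *m oe i j c.
Proof.
move=> vij hc le hJ; move: X; apply: lev_ind => //.
  by exists 1%:M; split; [exact: RL1 | rewrite !map_mx1 mulmx1 mul1mx].
move=> p q t X0 vpq Jt _ [W0 [hW0 E0]].
have [W [h1 h2 _]] := engine t vij hc le vpq.
exists (W *m W0); split; first by apply: RL_mul => //; apply: h2.
by rewrite map_mxM (intertw h1 E0) map_mxM.
Qed.

Lemma RLgen_inv_gen N J (g h : 'M[A]_m) : RLgen al N J g -> h *m g = 1%:M -> RLgen al N J h.
Proof.
case=> G [G' [H [lG h1 h2 lH eg]]] hg.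
have [H' [lH' e1 e2]] := lev_inv lH.
exists G, G', H'; split => //.
apply: (inv_uniq (X := g)) => //.
by rewrite eg !mulmxA -(mulmxA _ G') h1 mulmx1 -(mulmxA _ H) e1 mulmx1.
Qed.

Lemma conj_RLgen i j c k r N M J g : valid i j -> c * lam ^+ k = psi r ->
  (2 * (M + k) <= N)%N -> is_ideal J -> RLgen al N J g ->
  exists W, RL al M J W /\ oe i j c *m Ps g = Ps W *m oe i j c.
Proof.
move=> vij hc le hJ [G [G' [H [lG h1 h2 lH ->]]]].
have [G1 [hG1 EG]] := conj_lev vij hc le (@is_ideal_T A) lG.
have lG1 := RL_abs hG1.
have [H1 [hH1 EH]] := conj_lev vij hc le hJ lH.
have [G1' [lG1' e1 e2]] := lev_inv lG1.
have EG' : oe i j c *m Ps G' = Ps G1' *m oe i j c.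
  have PG : Ps G *m Ps G' = 1%:M by rewrite -map_mxM h2 map_mx1.
  apply: esym; rewrite -[Ps G1' *m _]mulmx1 -PG mulmxA.
  by rewrite -(mulmxA (Ps G1') _ (Ps G)) EG mulmxA -map_mxM e2 map_mx1 mul1mx.
exists (G1 *m H1 *m G1'); split; first by apply: RL_conj.
by rewrite !map_mxM (intertw (intertw EG EH) EG') ?map_mxM.
Qed.

Lemma conj_RL i j c k r N M J X : valid i j -> c * lam ^+ k = psi r ->
  (2 * (M + k) <= N)%N -> is_ideal J -> RL al N J X ->
  exists W, RL al M J W /\ oe i j c *m Ps X = Ps W *m oe i j c.
Proof.
move=> vij hc le hJ; elim=> [|g X0 Pg _ [W0 [hW0 E0]]|g h X0 Pg hg gh _ [W0 [hW0 E0]]].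
- by exists 1%:M; split; [exact: RL1 | rewrite !map_mx1 mulmx1 mul1mx].
- have [W [hW E]] := conj_RLgen vij hc le hJ Pg.
  exists (W *m W0); split; first exact: RL_mul.
  by rewrite map_mxM (intertw E E0) map_mxM.
- have [W [hW E]] := conj_RLgen vij hc le hJ (RLgen_inv_gen Pg hg).
  exists (W *m W0); split; first exact: RL_mul.
  by rewrite map_mxM (intertw E E0) map_mxM.
Qed.

Definition Kk k : B -> Prop := fun c => exists r, c * lam ^+ k = psi r.
Definition Kr k (J : A -> Prop) : B -> Prop := fun c => exists r, J r /\ c * lam ^+ k = psi r.

Lemma CL_word k mm (C : 'M[B]_m) J : wordP (Kk k) mm C -> is_ideal J ->
  forall M (W : 'M[A]_m), RL al (Fw k mm M) J W ->
  exists W', RL al M J W' /\ C *m Ps W = Ps W' *m C.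
Proof.
move=> w hJ; elim: w => [|i j z mm' C1 v [r hz] _ IH] M W hW.
  by exists W; rewrite mulmx1 mul1mx.
have [W1 [hW1 E1]] := IH _ _ hW.
have [W' [hW' E']] := conj_RL v hz (leqnn _) hJ hW1.
by exists W'; split => //; rewrite -mulmxA E1 mulmxA E' mulmxA.
Qed.

Lemma comm1 i j c k r N M J V : valid i j -> c * lam ^+ k = psi r -> J r -> is_ideal J ->
  (2 * (M + k) <= N)%N -> lev al N (@predTT A) V ->
  exists R, RL al M J R /\ oe i j c *m Ps V = Ps (R *m V) *m oe i j c.
Proof.
move=> vij hc Jr hJ le; move: V; apply: lev_ind => //.
  by exists 1%:M; split; [exact: RL1 | rewrite mul1mx !map_mx1 mulmx1 mul1mx].
move=> p q t X0 vpq _ lX0 [R0 [hR0 E0]].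
set g := oe p q (al ^+ N * t).
set g' := oe p q (- (al ^+ N * t)).
have gg' : g *m g' = 1%:M by rewrite oeN.
have g'g : g' *m g = 1%:M by rewrite oeN'.
have [W [h1 _ h3]] := engine t vij hc le vpq.
rewrite -/g in h1 h3.
have lg : lev al M (@predTT A) g by apply: lev_letter' => //; lia.
exists ((W *m g') *m (g *m R0 *m g')); split.
  by apply: RL_mul; [exact: h3 | apply: RL_conj].
rewrite map_mxM mulmxA h1 -mulmxA E0 mulmxA -map_mxM; congr (Ps _ *m _).
by rewrite !mulmxA -(mulmxA _ g' g) g'g mulmx1 -(mulmxA _ g' g) g'g mulmx1.
Qed.

Lemma Comm_word k mm (h0 : 'M[B]_m) J : wordP (Kr k J) mm h0 -> is_ideal J ->
  forall M (V : 'M[A]_m), lev al (Fw k mm M) (@predTT A) V ->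
  exists R, RL al M J R /\ h0 *m Ps V = Ps (R *m V) *m h0.
Proof.
move=> w hJ; elim: w => [|i j z mm' h1 v [r [Jr hz]] _ IH] M V hV.
  by exists 1%:M; split; [exact: RL1 | rewrite mul1mx mulmx1 mul1mx].
have [R1 [hR1 E1]] := IH _ _ hV.
have [R1' [hR1' E1']] := conj_RL v hz (leqnn _) hJ hR1.
have lV : lev al (2 * (M + k)) (@predTT A) V.
  by apply: (lev_mono (@is_ideal_T A)) hV; apply: Fw_ge.
have [R2 [hR2 E2]] := comm1 v hz Jr hJ (leqnn _) lV.
exists (R1' *m R2); split; first exact: RL_mul.
rewrite -mulmxA E1 mulmxA map_mxM mulmxA E1' -(mulmxA (Ps R1')) E2.
by rewrite !map_mxM !mulmxA.
Qed.

Lemma Comm_rho k mg mh mg' (g0 h0 g0' : 'M[B]_m) J :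
  wordP (Kk k) mg g0 -> wordP (Kk k) mg' g0' -> wordP (Kr k J) mh h0 -> is_ideal J ->
  g0 *m g0' = 1%:M -> g0' *m g0 = 1%:M ->
  forall M (V : 'M[A]_m), lev al (Fw k mg' (Fw k mh (Fw k mg M))) (@predTT A) V ->
  exists R, RL al M J R /\ (g0 *m h0 *m g0') *m Ps V = Ps (R *m V) *m (g0 *m h0 *m g0').
Proof.
move=> wg wg' wh hJ e1 e2 M V lV.
have hT := @is_ideal_T A.
have [V2 [hV2 E2]] := CL_word wg' hT (RL_lev lV).
have [R [hR ER]] := Comm_word wh hJ (RL_abs hV2).
have [R' [hR' ER']] := CL_word wg hJ hR.
have EV : g0 *m Ps V2 = Ps V *m g0.
  by rewrite -[g0 *m _]mulmx1 -e2 mulmxA -(mulmxA g0) -E2 mulmxA e1 mul1mx.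
exists R'; split => //.
rewrite -mulmxA E2 mulmxA -(mulmxA g0) ER mulmxA map_mxM mulmxA ER'.
by rewrite -(mulmxA _ g0) EV map_mxM !mulmxA.
Qed.

End Engine2.

Section ExtIdeal.
Variables (A B : comNzRingType) (f : A -> B) (J : A -> Prop).

Lemma ext0 : ext_ideal f J 0.
Proof. by exists [::]; split => //; rewrite big_nil. Qed.

Lemma ext_gen x y : J x -> ext_ideal f J (f x * y).
Proof.
move=> Jx; exists [:: (x, y)]; split; last by rewrite big_seq1.
by move=> p; rewrite inE => /eqP ->.
Qed.

Lemma extD u v : ext_ideal f J u -> ext_ideal f J v -> ext_ideal f J (u + v).
Proof.
move=> [s1 [h1 ->]] [s2 [h2 ->]]; exists (s1 ++ s2); split; last by rewrite big_cat.
by move=> p; rewrite mem_cat => /orP [] ?; [apply: h1 | apply: h2].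
Qed.

Lemma extM r u : ext_ideal f J u -> ext_ideal f J (r * u).
Proof.
move=> [s [h ->]]; exists [seq (p.1, r * p.2) | p <- s]; split.
  by move=> p /mapP [p' p's ->] /=; apply: h.
rewrite big_map mulr_sumr; apply: eq_bigr => p _ /=; ring.
Qed.

Lemma ext_ideal_is_ideal : is_ideal (ext_ideal f J).
Proof. split; [exact: ext0 | exact: extD | exact: extM]. Qed.

Lemma ext_ind (P : B -> Prop) : P 0 -> (forall x y u, J x -> ext_ideal f J u -> P u -> P (f x * y + u)) ->
  forall u, ext_ideal f J u -> P u.
Proof.
move=> P0 PS u [s [h ->]]; elim: s h => [|[x y] s IH] h; first by rewrite big_nil.
rewrite big_cons /=; apply: PS.
- by apply: (h (x, y)); rewrite inE eqxx.
- by exists s; split => // p ps; apply: h; rewrite inE ps orbT.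
- by apply: IH => p ps; apply: h; rewrite inE ps orbT.
Qed.

End ExtIdeal.

Section Loc.
Variables (R S : comNzRingType) (phi : {rmorphism R -> S}) (a : R) (I : R -> Prop).
Hypothesis hI : is_ideal I.
Hypothesis hloc : is_localization a phi.
Local Notation psi := (map_poly phi).
Local Notation al := (a%:P : {poly R}).
Local Notation lam := ((phi a)%:P : {poly S}).
Local Notation J0 := (ext_ideal (fun r : R => r%:P) I).
Local Notation K0 := (ext_ideal (fun r : R => (phi r)%:P) I).

Lemma psi_al : psi al = lam. Proof. by rewrite map_polyC. Qed.

Lemma lam_cancel (x y : {poly S}) k : x * lam ^+ k = y * lam ^+ k -> x = y.
Proof.
case: hloc => [[u hu] _ _] E.
have : x * lam ^+ k * (u%:P) ^+ k = y * lam ^+ k * (u%:P) ^+ k by rewrite E.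
by rewrite -!mulrA -exprMn -polyCM hu expr1n !mulr1.
Qed.

Lemma L1 (p : {poly S}) : exists k (r : {poly R}), p * lam ^+ k = psi r.
Proof.
case: hloc => _ hs _.
elim/poly_ind: p => [|p c [k1 [r1 E1]]]; first by exists 0%N, 0; rewrite mul0r rmorph0.
have [r2 [k2 E2]] := hs c.
exists (k1 + k2)%N, (r1 * 'X * (a ^+ k2)%:P + (r2 * a ^+ k1)%:P).
rewrite !(rmorphD, rmorphM, rmorphXn) /= map_polyX !map_polyC /= -E1 -E2.
rewrite polyCM rmorphXn exprD; ring.
Qed.

Lemma J0_ideal : is_ideal J0. Proof. exact: ext_ideal_is_ideal. Qed.

Lemma L2 (z : {poly S}) : K0 z -> exists k (r : {poly R}), J0 r /\ z * lam ^+ k = psi r.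
Proof.
elim/ext_ind => [|x y u Ix _ [k1 [r1 [Jr1 E1]]]]; first by exists 0%N, 0; split; [exact: ext0 | rewrite mul0r rmorph0].
have [k2 [r2 E2]] := L1 y.
exists (k1 + k2)%N, (x%:P * (r2 * al ^+ k1) + r1 * al ^+ k2); split.
  apply: extD; first exact: ext_gen.
  by rewrite mulrC; apply: extM.
rewrite rmorphD !rmorphM !rmorphXn /= psi_al map_polyC -E1 -E2 exprD; ring.
Qed.

Lemma dil_div (r y : {poly R}) : exists q, r \Po y - (r.[0])%:P = y * q.
Proof.
elim/poly_ind: r => [|p c _]; first by exists 0; rewrite comp_poly0 horner0 subr0 mulr0.
exists (p \Po y); rewrite comp_poly_MXaddC hornerD hornerMX hornerC mulr0 add0r addrK.
by rewrite mulrC.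
Qed.

Lemma dil_lam (z : {poly S}) k r (y : {poly R}) : z * lam ^+ k = psi r ->
  (z \Po psi y) * lam ^+ k = psi (r \Po y) /\ (z.[0])%:P * lam ^+ k = psi ((r.[0])%:P).
Proof.
move=> E; have Lc : lam ^+ k = ((phi a) ^+ k)%:P by rewrite rmorphXn.
split.
  have -> : (z \Po psi y) * lam ^+ k = (z * lam ^+ k) \Po psi y by rewrite comp_polyM Lc comp_polyC.
  by rewrite E map_comp_poly.
have H : (z * lam ^+ k).[0] = (psi r).[0] by rewrite E.
have H2 : (psi r).[0] = phi (r.[0]) by rewrite -{1}(rmorph0 phi) horner_map.
rewrite Lc hornerM hornerC H2 in H.
by rewrite Lc -polyCM H map_polyC.
Qed.

Lemma ADL (z : {poly S}) M : exists d, forall b, (exists s, b = a ^+ d * s) ->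
  exists t, z \Po ((phi b)%:P * 'X) - (z.[0])%:P = psi (al ^+ M * t).
Proof.
have [k [r E]] := L1 z; exists (M + k)%N => b [s ->].
set y := (a ^+ (M + k) * s)%:P * 'X.
have [q Eq] := dil_div r y.
exists (s%:P * 'X * q); apply: (@lam_cancel _ _ k).
have Y : (phi (a ^+ (M + k) * s))%:P * 'X = psi y by rewrite /y [in RHS]rmorphM /= map_polyX map_polyC.
have [E1 E2] := dil_lam y E.
rewrite Y mulrBl E1 E2 -rmorphB Eq /y.
rewrite !(rmorphM, rmorphXn) /= !map_polyC exprD; ring.
Qed.

Lemma dmono (d d' : nat) (b : R) : (d <= d')%N -> (exists s, b = a ^+ d' * s) -> exists s, b = a ^+ d * s.
Proof.
move=> le [s ->]; exists (a ^+ (d' - d) * s).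
by rewrite mulrA -exprD subnKC.
Qed.

Lemma ADLrel (z : {poly S}) M : K0 z -> exists d, forall b, (exists s, b = a ^+ d * s) ->
  exists t, J0 t /\ z \Po ((phi b)%:P * 'X) - (z.[0])%:P = psi (al ^+ M * t).
Proof.
elim/ext_ind => [|x y u Ix _ [d1 IH]].
  exists 0%N => b _; exists 0; split; first exact: ext0.
  by rewrite comp_poly0 horner0 polyC0 subr0 mulr0 rmorph0.
have [d2 H2] := ADL y M; exists (maxn d1 d2) => b hb.
have [t1 [Jt1 E1]] := IH b (dmono (leq_maxl d1 d2) hb).
have [t2 E2] := H2 b (dmono (leq_maxr d1 d2) hb).
exists (x%:P * t2 + t1); split.
  by apply: extD => //; exact: ext_gen.
set Y := (phi b)%:P * 'X.
have -> : ((phi x)%:P * y + u) \Po Y - ((((phi x)%:P * y + u)).[0])%:P =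
   (phi x)%:P * (y \Po Y - (y.[0])%:P) + (u \Po Y - (u.[0])%:P).
  by rewrite comp_polyD comp_polyM comp_polyC hornerD hornerM hornerC polyCD polyCM; ring.
rewrite E1 E2 !(rmorphD, rmorphM) /= map_polyC; ring.
Qed.

End Loc.

Section Main.
Variables (R S : comNzRingType) (phi : {rmorphism R -> S}) (a : R) (I : R -> Prop) (n : nat).
Hypothesis hI : is_ideal I.
Hypothesis hloc : is_localization a phi.
Hypothesis n3 : (3 <= n)%N.
Local Notation m := (n.*2).
Local Notation psi := (map_poly phi : {rmorphism {poly R} -> {poly S}}).
Local Notation Ps := (map_mx psi).
Local Notation al := (a%:P : {poly R}).
Local Notation lam := ((phi a)%:P : {poly S}).
Local Notation J0 := (ext_ideal (fun r : R => r%:P) I).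
Local Notation K0 := (ext_ideal (fun r : R => (phi r)%:P) I).
Local Notation Dil b := (map_mx (comp_poly ((phi b)%:P * 'X))).
Local Notation c0 Z := (map_mx polyC (map_mx (horner_eval 0) Z)).
Local Notation KK k := (Kk psi al k).
Local Notation KR k J := (Kr psi al k J).

Lemma psal : psi al = lam. Proof. exact: psi_al. Qed.

Lemma KK_mono k d c : KK k c -> KK (k + d) c.
Proof.
case=> r E; exists (r * al ^+ d); rewrite rmorphM rmorphXn exprD mulrA E.
by [].
Qed.

Lemma KR_mono k d (J : {poly R} -> Prop) c : is_ideal J -> KR k J c -> KR (k + d) J c.
Proof.
move=> hJ [r [Jr E]]; exists (r * al ^+ d); split; first exact: jMr.
by rewrite rmorphM rmorphXn exprD mulrA E.
Qed.

Lemma KK_L1 (z : {poly S}) : exists k, KK k z.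
Proof. by have [k [r E]] := L1 hloc z; exists k, r; rewrite psal. Qed.

Lemma KR_L2 (z : {poly S}) : K0 z -> exists k, KR k J0 z.
Proof. by move=> Kz; have [k [r [Jr E]]] := L2 hloc Kz; exists k, r; rewrite psal. Qed.

Lemma word_k_abs mm (C : 'M[{poly S}]_m) : wordP (@predTT _) mm C -> exists k, wordP (KK k) mm C.
Proof.
elim=> [|i j z mm' C1 v _ _ [k IH]]; first by exists 0%N; apply: wp0.
have [k1 Hz] := KK_L1 z.
exists (k + k1)%N; apply: wpS => //.
  by rewrite addnC; apply: KK_mono.
by apply: wordP_sub IH => c Hc; apply: KK_mono.
Qed.

Lemma word_k_rel mm (C : 'M[{poly S}]_m) : wordP K0 mm C -> exists k, wordP (KR k J0) mm C.
Proof.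
elim=> [|i j z mm' C1 v Kz _ [k IH]]; first by exists 0%N; apply: wp0.
have [k1 Hz] := KR_L2 Kz.
exists (k + k1)%N; apply: wpS => //.
  by rewrite addnC; apply: KR_mono => //; apply: J0_ideal.
by apply: wordP_sub IH => c Hc; apply: KR_mono => //; apply: J0_ideal.
Qed.

Lemma KK_c0 k c : KK k c -> KK k ((horner_eval 0 c)%:P).
Proof.
case=> r E; exists ((r.[0])%:P); rewrite horner_evalE psal.
have E' : c * lam ^+ k = psi r by rewrite -psal.
by have [_ E2] := dil_lam 0 E'.
Qed.

Lemma J0_c0 r : J0 r -> J0 ((r.[0])%:P).
Proof.
elim/ext_ind => [|x y u Ix _ IH]; first by rewrite horner0; exact: ext0.
rewrite hornerD hornerM hornerC polyCD polyCM.
by apply: extD => //; apply: ext_gen.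
Qed.

Lemma KR_c0 k c : KR k J0 c -> KR k J0 ((horner_eval 0 c)%:P).
Proof.
case=> r [Jr E]; exists ((r.[0])%:P); split; first exact: J0_c0.
rewrite horner_evalE psal.
have E' : c * lam ^+ k = psi r by rewrite -psal.
by have [_ E2] := dil_lam 0 E'.
Qed.

Lemma KK_dil k b c : KK k c -> KK k (comp_poly ((phi b)%:P * 'X) c).
Proof.
case=> r E; exists (r \Po (b%:P * 'X)).
have E' : c * lam ^+ k = psi r by rewrite -psal.
have [E2 _] := dil_lam (b%:P * 'X) E'.
have Y : map_poly phi (b%:P * 'X) = (phi b)%:P * 'X.
  by rewrite rmorphM /= map_polyC map_polyX.
by rewrite Y in E2; rewrite psal; exact: E2.
Qed.

Lemma Q_word (K : {poly S} -> Prop) (J : {poly R} -> Prop) mm (Z : 'M[{poly S}]_m) :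
  is_ideal J ->
  (forall z, K z -> forall M, exists d, forall b, (exists s, b = a ^+ d * s) ->
      exists t, J t /\ z \Po ((phi b)%:P * 'X) - (z.[0])%:P = psi (al ^+ M * t)) ->
  wordP K mm Z ->
  forall M, exists d, forall b, (exists s, b = a ^+ d * s) ->
    exists W, RL al M J W /\ Dil b Z = Ps W *m c0 Z.
Proof.
move=> hJ hdil; elim=> [|i j z mm' Z1 v Kz _ IH] M.
  exists 0%N => b _; exists 1%:M; split; first exact: RL1.
  by rewrite !map_mx1 mul1mx.
have [k Hz] := KK_L1 z; have [r0 E0] := KK_c0 Hz.
have [d1 H1] := IH (2 * (M + k))%N.
have [d2 H2] := hdil z Kz M.
exists (maxn d1 d2) => b hb.
have [W1 [hW1 E1]] := H1 b (dmono (leq_maxl d1 d2) hb).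
have [t [Jt Et]] := H2 b (dmono (leq_maxr d1 d2) hb).
have [W1' [hW1' E1']] := conj_RL n3 v E0 (leqnn _) hJ hW1.
exists (oe i j (al ^+ M * t) *m W1'); split.
  by apply: RL_mul => //; apply: RL_lev; exact: lev_letter.
have Esplit : oe i j (comp_poly ((phi b)%:P * 'X) z) =
    oe i j (psi (al ^+ M * t)) *m oe i j ((horner_eval 0 z)%:P).
  by rewrite oe_add // -Et horner_evalE subrK.
rewrite !map_mxM !map_oe Esplit E1 -!mulmxA (mulmxA (oe i j _) (Ps W1)) E1'.
by rewrite !mulmxA.
Qed.

Lemma ADLT (z : {poly S}) M : exists d, forall b, (exists s, b = a ^+ d * s) ->
  exists t, @predTT _ t /\ z \Po ((phi b)%:P * 'X) - (z.[0])%:P = psi (al ^+ M * t).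
Proof.
have [d H] := ADL hloc z M; exists d => b hb.
by have [t Et] := H b hb; exists t.
Qed.

Lemma KK_le k k' c : (k <= k')%N -> KK k c -> KK k' c.
Proof. by move=> le Hc; rewrite -(subnKC le); apply: KK_mono. Qed.

Lemma KR_le k k' c : (k <= k')%N -> KR k J0 c -> KR k' J0 c.
Proof. by move=> le Hc; rewrite -(subnKC le); apply: KR_mono => //; apply: J0_ideal. Qed.

Lemma K0_ideal : is_ideal K0. Proof. exact: ext_ideal_is_ideal. Qed.

Lemma wordK_c0 k mm (C : 'M[{poly S}]_m) : wordP (KK k) mm C -> wordP (KK k) mm (c0 C).
Proof.
move=> w; apply: (@wordP_map _ _ polyC _ (fun s => KK k s%:P)) => //.
by apply: wordP_map w => c; apply: KK_c0.
Qed.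

Lemma wordR_c0 k mm (C : 'M[{poly S}]_m) : wordP (KR k J0) mm C -> wordP (KR k J0) mm (c0 C).
Proof.
move=> w; apply: (@wordP_map _ _ polyC _ (fun s => KR k J0 s%:P)) => //.
by apply: wordP_map w => c; apply: KR_c0.
Qed.

Lemma EO_word_k (C : 'M[{poly S}]_m) : EO n C -> exists k mm, wordP (KK k) mm C.
Proof.
move=> hC; have hC' : EOI n (fun _ => True) C := hC.
have [mm w] := EOI_wordP (fun _ _ => Logic.I) hC'.
by have [k wk] := word_k_abs w; exists k, mm.
Qed.

Lemma Q_gen (g g' H0 : 'M[{poly S}]_m) : EO n g -> g' *m g = 1%:M -> g *m g' = 1%:M ->
  EOI n K0 H0 ->
  forall M, exists d, forall b, (exists s, b = a ^+ d * s) ->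
    exists W, RL al M J0 W /\ Dil b (g *m H0 *m g') = Ps W *m c0 (g *m H0 *m g').
Proof.
move=> hg e1 e2 hH M.
have hg' : EOI n (fun _ => True) g := hg.
have [mg wg] := EOI_wordP (fun _ _ => Logic.I) hg'.
have [g'' [wg' f1 f2]] := wordP_inv (fun _ _ => Logic.I) wg.
have eg' : g' = g'' by apply: (inv_uniq f1 e1).
rewrite -eg' in wg'.
have [mh wh] := EOI_wordP (fun z => jN K0_ideal) hH.
have [k1 wg1] := word_k_abs wg.
have [k2 wg2] := word_k_abs wg'.
have [k3 wh3] := word_k_rel wh.
set k := (k1 + k2 + k3)%N.
have wgk : wordP (KK k) mg g by apply: wordP_sub wg1 => c; apply: KK_le; rewrite /k; lia.
have wg'k : wordP (KK k) mg g' by apply: wordP_sub wg2 => c; apply: KK_le; rewrite /k; lia.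
have whk : wordP (KR k J0) mh H0 by apply: wordP_sub wh3 => c; apply: KR_le; rewrite /k; lia.
have wg0 := wordK_c0 wgk; have wg0' := wordK_c0 wg'k; have wh0 := wordR_c0 whk.
have c1 : c0 g *m c0 g' = 1%:M by rewrite -!map_mxM e2 !map_mx1.
have c2 : c0 g' *m c0 g = 1%:M by rewrite -!map_mxM e1 !map_mx1.
set N3 := Fw k mg M.
set NV := Fw k mg (Fw k mh (Fw k mg M)).
have [d1 H1] := Q_word (@J0_ideal _ I) (fun z Kz M' => ADLrel hloc M' Kz) wh N3.
have [d2 H2] := Q_word (@is_ideal_T _) (fun z _ M' => ADLT z M') wg (maxn NV M).
exists (maxn d1 d2) => b hb.
have [H [hHH EH]] := H1 b (dmono (leq_maxl d1 d2) hb).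
have [G [hG EG]] := H2 b (dmono (leq_maxr d1 d2) hb).
have lG := RL_abs hG.
have [G' [lG' f3 f4]] := lev_inv lG.
have Dg' : c0 g' *m Ps G' = Dil b g'.
  apply: (inv_uniq (X := Dil b g)).
    by rewrite -map_mxM e2 map_mx1.
  by rewrite EG !mulmxA -(mulmxA _ (Ps G')) -map_mxM f4 map_mx1 mulmx1 c2.
have [H1' [hH1' EH1]] := CL_word n3 wg0 (@J0_ideal _ I) hHH.
have lG'V : lev al NV (@predTT _) G'.
  by apply: (lev_mono (@is_ideal_T _)) lG'; apply: leq_maxl.
have [Rr [hR ER]] := Comm_rho n3 wg0 wg0' wh0 (@J0_ideal _ I) c1 c2 lG'V.
exists (G *m (H1' *m Rr) *m G'); split.
  apply: RL_conj => //; last exact: RL_mul.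
  by apply: (lev_mono (@is_ideal_T _)) lG; apply: leq_maxr.
rewrite !map_mxM EG EH -Dg'.
transitivity (Ps G *m (c0 g *m Ps H) *m c0 H0 *m c0 g' *m Ps G'); first by rewrite !mulmxA.
rewrite EH1.
transitivity (Ps G *m Ps H1' *m ((c0 g *m c0 H0 *m c0 g') *m Ps G')); first by rewrite !mulmxA.
by rewrite ER !map_mxM !mulmxA.
Qed.

Lemma rho_word (g g' H0 : 'M[{poly S}]_m) : EO n g -> g' *m g = 1%:M -> g *m g' = 1%:M ->
  EOI n K0 H0 -> exists k mm, wordP (KK k) mm (c0 (g *m H0 *m g')).
Proof.
move=> hg e1 e2 hH.
have hg' : EOI n (fun _ => True) g := hg.
have [mg wg] := EOI_wordP (fun _ _ => Logic.I) hg'.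
have [g'' [wg' f1 f2]] := wordP_inv (fun _ _ => Logic.I) wg.
have eg' : g' = g'' by apply: (inv_uniq f1 e1).
rewrite -eg' in wg'.
have [mh wh] := EOI_wordP (fun z => jN K0_ideal) hH.
have [k1 wg1] := word_k_abs wg.
have [k2 wg2] := word_k_abs wg'.
have [k3 wh3] := word_k_rel wh.
set k := (k1 + k2 + k3)%N.
have wgk : wordP (KK k) mg g by apply: wordP_sub wg1 => c; apply: KK_le; rewrite /k; lia.
have wg'k : wordP (KK k) mg g' by apply: wordP_sub wg2 => c; apply: KK_le; rewrite /k; lia.
have whk : wordP (KK k) mh H0.
  apply: wordP_sub wh3 => c Hc; apply: (@KK_le k3); first by rewrite /k; lia.
  by case: Hc => r [_ E]; exists r.
exists k, (mg + mh + mg)%N; apply: wordK_c0.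
by apply: wordP_mul => //; apply: wordP_mul.
Qed.

Lemma Q_step (g g' H0 al1 : 'M[{poly S}]_m) : EO n g -> g' *m g = 1%:M -> g *m g' = 1%:M ->
  EOI n K0 H0 ->
  (forall M, exists d, forall b, (exists s, b = a ^+ d * s) ->
    exists W, RL al M J0 W /\ Dil b al1 = Ps W *m c0 al1) ->
  forall M, exists d, forall b, (exists s, b = a ^+ d * s) ->
    exists W, RL al M J0 W /\ Dil b (g *m H0 *m g' *m al1) = Ps W *m c0 (g *m H0 *m g' *m al1).
Proof.
move=> hg e1 e2 hH IH M.
have [k [mm wr]] := rho_word hg e1 e2 hH.
have [dr Hr] := Q_gen hg e1 e2 hH M.
have [d1 H1] := IH (Fw k mm M).
exists (maxn dr d1) => b hb.
have [Wr [hWr Er]] := Hr b (dmono (leq_maxl dr d1) hb).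
have [W1 [hW1 E1]] := H1 b (dmono (leq_maxr dr d1) hb).
have [W1' [hW1' E1']] := CL_word n3 wr (@J0_ideal _ I) hW1.
exists (Wr *m W1'); split; first exact: RL_mul.
rewrite (map_mxM _ (g *m H0 *m g')) Er E1 mulmxA -(mulmxA (Ps Wr)) E1'.
rewrite (map_mxM (horner_eval 0) (g *m H0 *m g') al1).
rewrite (map_mxM polyC (map_mx (horner_eval 0) (g *m H0 *m g')) (map_mx (horner_eval 0) al1)).
by rewrite (map_mxM _ Wr W1') !mulmxA.
Qed.

Lemma Q_top (al0 : 'M[{poly S}]_m) : EOrel n K0 al0 ->
  forall M, exists d, forall b, (exists s, b = a ^+ d * s) ->
    exists W, RL al M J0 W /\ Dil b al0 = Ps W *m c0 al0.
Proof.
elim=> [|rho al1 Prho _ IH|rho h al1 Prho hr rh _ IH] M.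
- exists 0%N => b _; exists 1%:M; split; first exact: RL1.
  by rewrite !map_mx1 mul1mx.
- case: Prho => g [g' [H0 [hg e1 e2 hH ->]]].
  exact: Q_step.
- case: Prho => g [g' [H0 [hg e1 e2 hH Er]]].
  have [H0' [hH0' f1 f2]] := EOI_inv hH.
  have -> : h = g *m H0' *m g'.
    apply: (inv_uniq (X := rho)) => //.
    by rewrite Er !mulmxA -(mulmxA _ g' g) e1 mulmx1 -(mulmxA _ H0 H0') f1 mulmx1.
  exact: Q_step.
Qed.

End Main.

Lemma gg_map (A : comNzRingType) m (P Q : 'M[A]_m -> Prop) (f : {rmorphism A -> A}) X :
  (forall g, P g -> Q (map_mx f g)) -> gen_group P X -> gen_group Q (map_mx f X).
Proof.
move=> PQ; elim=> [|g M Pg _ IH|g h M Pg hg gh _ IH].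
- by rewrite map_mx1; exact: gen_one.
- by rewrite map_mxM; apply: gen_mul => //; apply: PQ.
- rewrite map_mxM; apply: (gen_mulinv (g := map_mx f g)) => //.
  + exact: PQ.
  + by rewrite -map_mxM hg map_mx1.
  + by rewrite -map_mxM gh map_mx1.
Qed.

Lemma EOI_map (A : comNzRingType) n (K : A -> Prop) (f : {rmorphism A -> A}) X :
  (forall z, K z -> K (f z)) -> EOI n K X -> EOI n K (map_mx f X).
Proof.
move=> KK; apply: gg_map => g /oe_gen_valid [i [j [z [v Kz ->]]]].
by rewrite map_oe; apply: valid_oe_gen => //; apply: KK.
Qed.

Lemma EOrel_map (A : comNzRingType) n (K : A -> Prop) (f : {rmorphism A -> A}) X :
  (forall z, K z -> K (f z)) -> EOrel n K X -> EOrel n K (map_mx f X).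
Proof.
move=> KK; apply: gg_map => g [G [G' [H [hG e1 e2 hH ->]]]].
exists (map_mx f G), (map_mx f G'), (map_mx f H); split.
- have hG' : EOI n (fun _ => True) G := hG.
  by apply: (EOI_map (K := fun _ => True)).
- by rewrite -map_mxM e1 map_mx1.
- by rewrite -map_mxM e2 map_mx1.
- exact: EOI_map.
- by rewrite !map_mxM.
Qed.

Lemma EOrel_inv (A : comNzRingType) n (K : A -> Prop) X : EOrel n K X ->
  exists X', [/\ EOrel n K X', X *m X' = 1%:M & X' *m X = 1%:M].
Proof.
apply: gg_inv => g [G [G' [H [hG e1 e2 hH ->]]]].
have [H' [_ f1 f2]] := EOI_inv hH.
exists (G *m H' *m G'); split.
  by rewrite !mulmxA -(mulmxA _ G' G) e1 mulmx1 -(mulmxA _ H' H) f2 mulmx1.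
by rewrite !mulmxA -(mulmxA _ G' G) e1 mulmx1 -(mulmxA _ H H') f1 mulmx1.
Qed.


Unset Implicit Arguments.

Theorem mainTheorem8 (R S : comNzRingType) (phi : {rmorphism R -> S})
    (I : R -> Prop) (n : nat) (a : R) (alpha : 'M[{poly S}]_(n.*2)) :
  is_ideal I -> (3 <= n)%N -> (forall k : nat, a ^+ k != 0) ->
  is_localization a phi ->
  EOrel n (ext_ideal (fun r => (phi r)%:P) I) alpha ->
  map_mx (fun p => p.[0]) alpha = 1%:M ->
  exists d : nat, forall b : R, (exists r, b = a ^+ d * r) ->
    exists astar : 'M[{poly R}]_(n.*2),
      [/\ EOrel n (ext_ideal (fun r => r%:P) I) astar,
          map_mx (fun p => p.[0]) astar = 1%:M
        & map_mx (map_poly phi) astar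
          = map_mx (fun p => p \Po ((phi b)%:P * 'X)) alpha].
Proof.
move=> hI n3 _ hloc halpha h0.
have [d Hd] := Q_top hloc n3 halpha 0.
exists d => b hb.
have [W [hW E]] := Hd b hb.
have h0' : map_mx (horner_eval 0) alpha = 1%:M := h0.
rewrite h0' map_mx1 mulmx1 in E.
pose f : {rmorphism {poly R} -> {poly R}} := (polyC \o horner_eval 0)%FUN.
have hWrel := RL_EOrel hW.
have hWc : EOrel n (ext_ideal (fun r => r%:P) I) (map_mx f W).
  by apply: EOrel_map hWrel => z Jz; apply: J0_c0.
have [Wc' [hWc' f1 f2]] := EOrel_inv hWc.
have ev : map_mx (horner_eval 0) (map_mx f W) = map_mx (horner_eval 0) W.
  by apply/matrixP => i j; rewrite !mxE /= !horner_evalE hornerC.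
have PWc : map_mx (map_poly phi) (map_mx f W) = 1%:M.
  apply/matrixP => i j.
  have := congr1 (fun M : 'M[{poly S}]_(n.*2) => (M i j).[0]) E.
  rewrite !mxE /= horner_comp hornerMX mulr0 -{2}(rmorph0 phi) horner_map.
  have := congr1 (fun M : 'M[S]_(n.*2) => M i j) h0'.
  rewrite !mxE horner_evalE => H1 H2.
  by rewrite horner_evalE map_polyC /= -H2 H1 rmorph_nat.
exists (W *m Wc'); split.
- exact: gg_mul.
- change (map_mx (horner_eval 0) (W *m Wc') = 1%:M).
  by rewrite map_mxM -ev -map_mxM f1 map_mx1.
- have PWc' : map_mx (map_poly phi) Wc' = 1%:M.
    by rewrite -[LHS]mul1mx -PWc -map_mxM f1 map_mx1.
  by rewrite map_mxM PWc' mulmx1 -E.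
Qed.
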